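(* Suppose the e-values are valid, i.e. $\mathbb{E}[e_t\mid\mathcal{F}_{t-1}]\le1$ a.s. whenever $\theta_t=0$. Fix $d\in(0,1]$ and define the oracle estimate of the decaying-memory FDP $$\mathrm{mem\text{-}FDP}^*(t)=\sum_{j\in\mathcal{H}_0(t)}\frac{\alpha_j}{d\,R^{\mathrm d}_{j-1}+1}.$$ Then for every $t\ge1$: if $\mathbb{E}[\mathrm{mem\text{-}FDP}^*(t)]\le\alpha$, then $\mathrm{mem\text{-}FDR}(t)\le\alpha$.
   Context: Let $\alpha\in(0,1)$ be a target level. Hypotheses are indexed by $t=1,2,\dots$; $\theta_t\in\{0,1\}$ is a fixed (non-random) indicator with $\theta_t=0$ iff the $t$-th null hypothesis is true. $e_1,e_2,\dots$ are nonnegative random variables (e-values). Testing levels $\alpha_1,\alpha_2,\dots$ are nonnegative random variables and the decisions are $\delta_t=\mathbb{1}\{e_t\ge 1/\alpha_t\}$ (with $\delta_t=0$ when $\alpha_t=0$). Let $\mathcal{F}_t=\sigma(\delta_1,\dots,\delta_t)$, $\mathcal{F}_0$ trivial; each $\alpha_t$ is required to be $\mathcal{F}_{t-1}$-measurable. $\mathcal{H}_0(t)=\{j\le t:\theta_j=0\}$. For a decay parameter $d\in(0,1]$, $R^{\mathrm d}_t=\sum_{j=1}^t d^{t-j}\delta_j$ with $R^{\mathrm d}_0=0$, and the decaying-memory FDR is $\mathrm{mem\text{-}FDR}(t)=\mathbb{E}\big[\sum_{j\in\mathcal{H}_0(t)}d^{t-j}\delta_j\big/R^{\mathrm d}_t\big]$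 with the convention $0/0=0$. *)

(* Defs.v *)
From HB Require Import structures.
From mathcomp Require Import all_boot all_order all_algebra.
From mathcomp Require Import all_classical all_reals all_analysis.
Set Implicit Arguments. Unset Strict Implicit. Unset Printing Implicit Defensive.
Import Order.TTheory GRing.Theory Num.Theory.
Local Open Scope classical_set_scope.
Local Open Scope ring_scope.

(* Hypotheses are indexed by t = 1,2,...; index 0 of the sequences is unused. *)
Section OnlineFDR.
Context {T : Type} {R : realType}.

Definition delta (e alpha : nat -> T -> R) (t : nat) (x : T) : bool :=
  if alpha t x == 0 then false else (alpha t x)^-1 <= e t x.

Definition Rdec (d : R) (e alpha : nat -> T -> R) (t : nat) (x : T) : R :=
  \sum_(1 <= j < t.+1) d ^+ (t - j) * (delta e alpha j x)%:R.

(* F_t = sigma(delta_1, ..., delta_t): since the delta_j are boolean, these are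
   exactly the preimages of arbitrary sets of boolean sequences under
   x |-> (delta_1 x, ..., delta_t x).  F_0 = {set0, setT} is trivial. *)
Definition Fsets (e alpha : nat -> T -> R) (t : nat) : set (set T) :=
  [set A | exists S : set (seq bool),
     A = (fun x => [seq delta e alpha j x | j <- iota 1 t]) @^-1` S].

(* numerator of the decaying-memory FDP: sum over nulls j <= t (theta j = false) *)
Definition memV (d : R) (theta : nat -> bool) (e alpha : nat -> T -> R)
  (t : nat) (x : T) : R :=
  \sum_(1 <= j < t.+1 | ~~ theta j) d ^+ (t - j) * (delta e alpha j x)%:R.

(* decaying-memory FDP, with 0/0 = 0 (MathComp's 0^-1 = 0) *)
Definition memFDP (d : R) theta e alpha t x : R :=
  memV d theta e alpha t x / Rdec d e alpha t x.

Definition memFDPstar (d : R) (theta : nat -> bool) (e alpha : nat -> T -> R)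
  (t : nat) (x : T) : R :=
  \sum_(1 <= j < t.+1 | ~~ theta j)
     alpha j x / (d * Rdec d e alpha j.-1 x + 1).

End OnlineFDR.

(* Main.v *)
Require Import Defs.
From HB Require Import structures.
From mathcomp Require Import all_boot all_order all_algebra.
From mathcomp Require Import all_classical all_reals all_analysis.
Import Order.TTheory GRing.Theory Num.Theory.
Local Open Scope classical_set_scope.
Local Open Scope ring_scope.

Definition vv {T : Type} {R : realType} (e alpha : nat -> T -> R) n x :=
  [seq delta e alpha j x | j <- iota 1 n].

Lemma vv_delta {T : Type} {R : realType} (e alpha : nat -> T -> R) n x y :
  vv e alpha n x = vv e alpha n y ->
  forall j, (1 <= j <= n)%N -> delta e alpha j x = delta e alpha j y.
Proof.
move=> h j /andP[j1 jn].
have := congr1 (fun s => nth false s j.-1) h; rewrite /vv.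
rewrite !(nth_map 0%N) ?size_iota; last 2 first.
- by rewrite prednK.
- by rewrite prednK.
by rewrite nth_iota ?prednK // add1n prednK.
Qed.

Lemma vvS {T : Type} {R : realType} (e alpha : nat -> T -> R) n x :
  vv e alpha n.+1 x = rcons (vv e alpha n x) (delta e alpha n.+1 x).
Proof. rewrite /vv -(addn1 n) iotaD map_cat -cats1 /= add1n addn1. by []. Qed.

Lemma Rdec_rec {T : Type} {R : realType} (d : R) (e alpha : nat -> T -> R) m x :
  Rdec d e alpha m.+1 x = d * Rdec d e alpha m x + (delta e alpha m.+1 x)%:R.
Proof.
rewrite /Rdec big_nat_recr //= subnn expr0 mul1r; congr (_ + _).
rewrite mulr_sumr; apply: eq_big_nat => i /andP[_ hi].
by rewrite subSn // exprS mulrA.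
Qed.

Lemma Rdec_ge0 {T : Type} {R : realType} (d : R) (e alpha : nat -> T -> R) m x :
  0 <= d -> 0 <= Rdec d e alpha m x.
Proof. by move=> d0; apply: sumr_ge0 => i _; rewrite mulr_ge0 ?exprn_ge0. Qed.

Lemma Rdec_mono {T : Type} {R : realType} (d : R) (e alpha : nat -> T -> R) j t x :
  0 <= d -> (j <= t)%N -> d ^+ (t - j) * Rdec d e alpha j x <= Rdec d e alpha t x.
Proof.
move=> d0; elim: t => [|t IH]; first by rewrite leqn0 => /eqP ->; rewrite subnn expr0 mul1r.
rewrite leq_eqVlt => /orP[/eqP ->|]; first by rewrite subnn expr0 mul1r.
rewrite ltnS => jt; rewrite subSn // exprS -mulrA Rdec_rec.
apply: le_trans (_ : d * Rdec d e alpha t x <= _); last by rewrite lerDl ler0n.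
by rewrite ler_wpM2l // IH.
Qed.

Lemma delta_alt {T : Type} {R : realType} (e alpha : nat -> T -> R) t x :
  0 <= alpha t x ->
  delta e alpha t x = (alpha t x != 0) && (1 <= alpha t x * e t x).
Proof.
move=> a0; rewrite /delta; case: eqP => //= /eqP ha.
have hp : 0 < alpha t x by rewrite lt_def ha.
by rewrite -[X in X = _](ler_pM2l hp) mulfV // mulr1.

Qed.

Lemma term_bound {T : Type} {R : realType} (d : R) (e alpha : nat -> T -> R) t j x :
  0 < d -> (forall t x, 0 <= alpha t x) -> (forall t x, 0 <= e t x) ->
  (1 <= j <= t)%N ->
  d ^+ (t - j) * (delta e alpha j x)%:R / Rdec d e alpha t x <=
  alpha j x * e j x / (d * Rdec d e alpha j.-1 x + 1).
Proof.
move=> d0 a0 e0 /andP[j1 jt].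
have q0 : 0 < d * Rdec d e alpha j.-1 x + 1.
  apply: (lt_le_trans ltr01); rewrite -subr_ge0 addrK; apply: mulr_ge0; [exact: ltW | exact: Rdec_ge0 (ltW d0)].
case hd: (delta e alpha j x); last first.
  by rewrite mulr0 mul0r divr_ge0 ?mulr_ge0 // ltW.
have hae : 1 <= alpha j x * e j x.
  by move: hd; rewrite delta_alt // => /andP[].
have hR := Rdec_mono d e alpha j t x (ltW d0) jt.
rewrite -(prednK j1) Rdec_rec prednK // hd in hR.
have dp : 0 < d ^+ (t - j) by rewrite exprn_gt0.
have c0 : 0 < d ^+ (t - j) * (d * Rdec d e alpha j.-1 x + 1) by rewrite mulr_gt0.
have Rp : 0 < Rdec d e alpha t x by apply: lt_le_trans hR.
rewrite mulr1; apply: le_trans (_ : d ^+ (t - j) /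
   (d ^+ (t - j) * (d * Rdec d e alpha j.-1 x + 1)) <= _).
  by rewrite (ler_wpM2l (ltW dp)) // lef_pV2 ?posrE // (le_trans _ hR).
rewrite invfM mulrA mulfV ?gt_eqF // mul1r.
by rewrite -[leLHS]mul1r ler_wpM2r // invr_ge0 ltW.
Qed.

Lemma pre_meas {R : realType} {dT : measure_display} {T : measurableType dT}
  (e alpha : nat -> T -> R) n :
  (forall j, (1 <= j <= n)%N -> measurable [set x | delta e alpha j x]) ->
  forall S : set (seq bool), measurable (vv e alpha n @^-1` S).
Proof.
elim: n => [_ S|n IH hm S].
  have [S0|S0] := pselect (S [::]).
    rewrite (_ : _ @^-1` S = setT) //; apply/seteqP; split => x //= _.
  rewrite (_ : _ @^-1` S = set0) //; apply/seteqP; split => x //=.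
have hm' : forall j, (1 <= j <= n)%N -> measurable [set x | delta e alpha j x].
  by move=> j /andP[j1 jn]; apply: hm; rewrite j1 /= ltnW.
have hD : measurable [set x | delta e alpha n.+1 x] by apply: hm; rewrite /= leqnn.
rewrite (_ : _ @^-1` S =
  (vv e alpha n @^-1` [set s | S (rcons s true)] `&` [set x | delta e alpha n.+1 x])
  `|` (vv e alpha n @^-1` [set s | S (rcons s false)] `&` ~` [set x | delta e alpha n.+1 x])).
  apply: measurableU; apply: measurableI; try exact: IH.
    exact: hD.
  exact: measurableC.
apply/seteqP; split => x /=; rewrite vvS.
  by case: (delta e alpha n.+1 x) => h; [left|right].
by case: (delta e alpha n.+1 x) => -[] [].
Qed.

Lemma fac_meas {R : realType} {dT : measure_display} {T : measurableType dT}
  (e alpha : nat -> T -> R) n (f : T -> R) :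
  (forall j, (1 <= j <= n)%N -> measurable [set x | delta e alpha j x]) ->
  (forall x y, vv e alpha n x = vv e alpha n y -> f x = f y) ->
  measurable_fun setT f.
Proof.
move=> hm hf _ B mB; rewrite setTI.
rewrite (_ : f @^-1` B = vv e alpha n @^-1` [set s | exists x, vv e alpha n x = s /\ B (f x)]).
  exact: pre_meas.
apply/seteqP; split => x /=; first by move=> Bx; exists x.
by move=> [y [h By]]; rewrite (hf x y (esym h)).
Qed.

Lemma dmeas {R : realType} {dT : measure_display} {T : measurableType dT}
  (e alpha : nat -> T -> R) :
  (forall t, measurable_fun setT (e t)) ->
  (forall t x, 0 <= alpha t x) ->
  (forall t, (1 <= t)%N -> forall B : set R, measurable B ->
     Fsets e alpha t.-1 (alpha t @^-1` B)) ->
  forall n j, (1 <= j <= n)%N -> measurable [set x | delta e alpha j x].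
Proof.
move=> me a0 ha; elim => [j /andP[j1 j0]|n IH j /andP[j1]].
  by move: (leq_trans j1 j0).
rewrite leq_eqVlt => /orP[/eqP ->|]; last by rewrite ltnS => jn; apply: IH; rewrite j1.
have ma : measurable_fun setT (alpha n.+1).
  move=> _ B mB; rewrite setTI; have [S ->] := ha n.+1 erefl B mB.
  exact: pre_meas.
have mb : measurable_fun setT (fun x => delta e alpha n.+1 x).
  rewrite (_ : (fun x => delta e alpha n.+1 x) = (fun x => (alpha n.+1 x != 0) &&
     (1 <= alpha n.+1 x * e n.+1 x))); last by apply/funext => x; rewrite delta_alt.
  apply: measurable_and.
    by apply: measurable_neg; apply: measurable_realfun.measurable_fun_eqr => //; exact: measurable_cst.
  apply: measurable_realfun.measurable_fun_ler; first exact: measurable_cst.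
  exact: measurable_realfun.measurable_funM.
have := mb measurableT [set true] I; rewrite setTI.
by [].
Qed.

Lemma key {R : realType} {dT : measure_display} {T : measurableType dT}
  (P : probability T R) (e alpha : nat -> T -> R) n (f E : T -> R) :
  (forall j, (1 <= j <= n)%N -> measurable [set x | delta e alpha j x]) ->
  measurable_fun setT E -> (forall x, 0 <= E x) -> (forall x, 0 <= f x) ->
  (forall x y, vv e alpha n x = vv e alpha n y -> f x = f y) ->
  (forall A, Fsets e alpha n A -> (\int[P]_(x in A) (E x)%:E <= P A)%E) ->
  (\int[P]_x (f x * E x)%:E <= \int[P]_x (f x)%:E)%E.
Proof.
move=> hm mE E0 f0 hf hv.
have mf := fac_meas _ _ _ _ hm hf.
pose ind (s : n.-tuple bool) x := ((vv e alpha n x == val s)%:R : R).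
have hsum x : \sum_(s : n.-tuple bool) ind s x = 1.
  have sz : size (vv e alpha n x) == n by rewrite size_map size_iota.
  rewrite (bigD1 (Tuple sz)) //= /ind eqxx big1 ?addr0 // => s hs.
  suff -> : (vv e alpha n x == val s) = false by [].
  apply/negbTE; apply: contra hs => /eqP h; apply/eqP/val_inj => /=.
  by rewrite h.
have e1 x : f x * E x = \sum_(s : n.-tuple bool) (f x * ind s x * E x).
  by rewrite -mulr_suml -mulr_sumr hsum mulr1.
have e2 x : f x = \sum_(s : n.-tuple bool) (f x * ind s x).
  by rewrite -mulr_sumr hsum mulr1.
have mind s : measurable_fun setT (ind s).
  apply: (fac_meas _ _ _ _ hm) => x y h; by rewrite /ind h.
under eq_integral do rewrite e1 -sumEFin.
rewrite ge0_integral_sum //; last first.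
  - move=> s x _; rewrite lee_fin mulr_ge0 ?mulr_ge0 //.
  - move=> s; apply/measurable_realfun.measurable_EFinP.
    by apply: measurable_realfun.measurable_funM => //; apply: measurable_realfun.measurable_funM.
under [X in (_ <= X)%E]eq_integral do rewrite e2 -sumEFin.
rewrite ge0_integral_sum //; last first.
  - by move=> s x _; rewrite lee_fin mulr_ge0.
  - move=> s; apply/measurable_realfun.measurable_EFinP.
    by apply: measurable_realfun.measurable_funM.
apply: lee_sum => s _.
set A := vv e alpha n @^-1` [set val s].
have mA : measurable A by apply: pre_meas.
have [[x0 hx0]|nex] := pselect (exists x0, vv e alpha n x0 = val s); last first.
have h0 x : ind s x = 0.
    rewrite /ind; case: eqP => // h; by case: nex; exists x.
  under eq_integral do rewrite h0 !mulr0 mul0r.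
  rewrite integral0; apply: integral_ge0 => x _; by rewrite lee_fin h0 mulr0.
  have hA x : f x * ind s x = f x0 * \1_A x.
    rewrite /ind indicE; case: (vv e alpha n x =P val s) => h.
      by rewrite mem_set //= (hf x x0) // h hx0.
    by rewrite memNset // !mulr0.
  under eq_integral do rewrite hA -mulrA EFinM.
  under [X in (_ <= X)%E]eq_integral do rewrite hA EFinM.
  rewrite ge0_integralZl //; last 3 first.
  - apply/measurable_realfun.measurable_EFinP; apply: measurable_realfun.measurable_funM => //.
  - by move=> x _; rewrite lee_fin mulr_ge0.
  - by rewrite lee_fin.
  rewrite ge0_integralZl //; last 2 first.
  - by apply/measurable_realfun.measurable_EFinP; exact: measurable_realfun.measurable_indic.
  - by rewrite lee_fin.
  apply: lee_wpmul2l; first by rewrite lee_fin.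
  rewrite integral_indic // setIT.
  apply: le_trans (hv A _); last by exists [set val s].
  rewrite [X in (_ <= X)%E]integral_mkcond; rewrite le_eqVlt; apply/orP; left; apply/eqP; apply: eq_integral => x _.
  by rewrite patchE indicE; case: ifP => _; rewrite ?mul1r ?mul0r.
Qed.

Lemma Rdec_fac {T : Type} {R : realType} (d : R) (e alpha : nat -> T -> R) n m x y :
  (m <= n)%N -> vv e alpha n x = vv e alpha n y -> Rdec d e alpha m x = Rdec d e alpha m y.
Proof.
move=> mn h; rewrite /Rdec; apply: eq_big_nat => i /andP[i1 im].
by rewrite (vv_delta _ _ _ _ _ h) // i1 (leq_trans _ mn).
Qed.

Theorem theorem2 (R : realType) (dT : measure_display) (T : measurableType dT)
  (P : probability T R) (alphaL : R) (theta : nat -> bool)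
  (e alpha : nat -> T -> R) (d : R) :
  0 < alphaL < 1 ->
  0 < d <= 1 ->
  (* e-values: nonnegative random variables *)
  (forall t, measurable_fun setT (e t)) ->
  (forall t x, 0 <= e t x) ->
  (* testing levels: nonnegative, alpha_t is F_{t-1}-measurable *)
  (forall t x, 0 <= alpha t x) ->
  (forall t, (1 <= t)%N -> forall B : set R, measurable B ->
     Fsets e alpha t.-1 (alpha t @^-1` B)) ->
  (* validity: E[e_t | F_{t-1}] <= 1 a.s. for null t, i.e.
     E[e_t 1_A] <= P(A) for every A in F_{t-1} *)
  (forall t, (1 <= t)%N -> ~~ theta t ->
     forall A, Fsets e alpha t.-1 A ->
     (\int[P]_(x in A) (e t x)%:E <= P A)%E) ->
  forall t, (1 <= t)%N ->
  (\int[P]_x (memFDPstar d theta e alpha t x)%:E <= alphaL%:E)%E ->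
  (\int[P]_x (memFDP d theta e alpha t x)%:E <= alphaL%:E)%E.
Proof.
move=> _ /andP[d0 _] me e0 a0 ha hv t t1 hstar.
have hdm := dmeas e alpha me a0 ha.
pose G j x := alpha j x / (d * Rdec d e alpha j.-1 x + 1).
have q0 j x : 0 < d * Rdec d e alpha j x + 1.
  apply: (lt_le_trans ltr01); rewrite -subr_ge0 addrK; apply: mulr_ge0;
    [exact: ltW | exact: Rdec_ge0 (ltW d0)].
have G0 j x : 0 <= G j x by rewrite divr_ge0 // ltW.
have Gfac j : (1 <= j)%N -> forall x y, vv e alpha j.-1 x = vv e alpha j.-1 y -> G j x = G j y.
  move=> j1 x y h; rewrite /G (Rdec_fac d e alpha _ _ _ _ (leqnn _) h); congr (_ / _).
  have [S hS] := ha j j1 [set alpha j x] (measurable_set1 _).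
  have : (alpha j @^-1` [set alpha j x]) x by [].
  rewrite hS /= => hx.
  have : (vv e alpha j.-1 @^-1` S) y by rewrite /= -h.
  by rewrite -hS /= => ->.
have mG j : (1 <= j)%N -> measurable_fun setT (G j).
  by move=> j1; apply: (fac_meas _ _ j.-1 _ (hdm j.-1)); exact: Gfac.
pose H1 j x := if (1 <= j)%N && ~~ theta j then G j x * e j x else 0.
pose H2 j x := if (1 <= j)%N && ~~ theta j then G j x else 0.
have pt x : memFDP d theta e alpha t x <= \sum_(j <- index_iota 1 t.+1) H1 j x.
  rewrite /memFDP /memV mulr_suml big_mkcond [X in X <= _]big_seq [X in _ <= X]big_seq.
  apply: ler_sum => j; rewrite mem_index_iota => /andP[j1 jt].
  rewrite /H1 j1 /=; case: (theta j) => //=.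
  by rewrite /G [leRHS]mulrAC; apply: term_bound => //; rewrite j1.
have hst x : memFDPstar d theta e alpha t x = \sum_(j <- index_iota 1 t.+1) H2 j x.
  rewrite /memFDPstar big_mkcond; apply: eq_big_seq => j.
  by rewrite mem_index_iota => /andP[j1 _]; rewrite /H2 j1.
have mH1 j : measurable_fun setT (H1 j).
  rewrite /H1; case hc: ((1 <= j)%N && ~~ theta j); last exact: measurable_cst.
  move/andP: hc => [j1 _].
  by apply: measurable_realfun.measurable_funM => //; exact: mG.
have mH2 j : measurable_fun setT (H2 j).
  rewrite /H2; case hc: ((1 <= j)%N && ~~ theta j); last exact: measurable_cst.
  move/andP: hc => [j1 _].
  exact: mG.
have H10 j x : 0 <= H1 j x by rewrite /H1; case: ifP => // _; rewrite mulr_ge0.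
have H20 j x : 0 <= H2 j x by rewrite /H2; case: ifP.
have mM : measurable_fun setT (memFDP d theta e alpha t).
  apply: (fac_meas _ _ t _ (hdm t)) => x y h.
  rewrite /memFDP (Rdec_fac d e alpha _ _ _ _ (leqnn _) h) /memV; apply: (f_equal (fun s => s / Rdec d e alpha t y)).
  rewrite big_nat_cond [RHS]big_nat_cond; apply: eq_bigr => i /andP[/andP[i1 it] _].
  by rewrite (vv_delta _ _ _ _ _ h) // i1.
apply: (le_trans _ hstar).
apply: le_trans (_ : (\int[P]_x (\sum_(j <- index_iota 1 t.+1) H1 j x)%:E <= _)%E).
  apply: ge0_le_integral => //.
  - move=> x _; rewrite lee_fin /memFDP divr_ge0 //; last exact: Rdec_ge0 (ltW d0).
    by apply: sumr_ge0 => i _; rewrite mulr_ge0 // exprn_ge0 // ltW.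
  - by apply/measurable_realfun.measurable_EFinP.
  - apply/measurable_realfun.measurable_EFinP; exact: measurable_sum.
  - by move=> x _; rewrite lee_fin.
under eq_integral do rewrite -sumEFin.
under [X in (_ <= X)%E]eq_integral do rewrite hst -sumEFin.
rewrite !ge0_integral_sum //; last 4 first.
- by move=> j; apply/measurable_realfun.measurable_EFinP.
- by move=> j x _; rewrite lee_fin.
- by move=> j; apply/measurable_realfun.measurable_EFinP.
- by move=> j x _; rewrite lee_fin.
apply: lee_sum => j _.
rewrite /H1 /H2; case hc: ((1 <= j)%N && ~~ theta j); last by [].
move/andP: hc => [j1 nt].
apply: (key P e alpha j.-1 (G j) (e j)) => //.
- exact: hdm.
- exact: Gfac.
- by move=> A hA; apply: hv.
Qed.
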